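(* Let $\mathcal{V}$ be a variety of algebras, $\mathcal{C}$ a full subcategory of the category of finitely generated free $\mathcal{V}$-algebras containing the free monogenic algebra $A_0$ on $x_0$, and $\Phi$ an automorphism of $\mathcal{C}$ with main function $(s^\Phi_A)$. Let $A$ be a $\mathcal{C}$-algebra and $X$ a basis of $\Phi(A)$. Then either no element of $X$ belongs to $s^\Phi_A(|A|)$, or $s^\Phi_A:|A|\to|\Phi(A)|$ is surjective.
   Context: Morphisms of $\mathcal{C}$ are all homomorphisms. For $a\in A$, $\alpha^A_a:A_0\to A$ is the homomorphism with $x_0\mapsto a$. Let $\eta^\Phi_0:\Phi^{-1}(A_0)\to A_0$ be the homomorphism sending every element of a fixed basis of $\Phi^{-1}(A_0)$ to $x_0$ (the identity if $\Phi(A_0)=A_0$), and $\eta^\Phi=\Phi(\eta^\Phi_0):A_0\to\Phi(A_0)$. The main function is $s^\Phi_A:|A|\to|\Phi(A)|$, $s^\Phi_A(a)=\Phi(\alpha^A_a)(\eta^\Phi(x_0))$. *)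

(* Defs.v *)
From mathcomp Require Import all_boot.
From Stdlib Require Import ClassicalEpsilon.
Set Implicit Arguments. Unset Strict Implicit. Unset Printing Implicit Defensive.

Record signature := Signature { op : Type; arity : op -> nat }.

Record algebra (S : signature) := Algebra {
  carrier :> Type;
  interp : forall f : op S, ('I_(arity f) -> carrier) -> carrier }.
Arguments interp {S} a f _.

Definition is_hom (S : signature) (A B : algebra S) (h : A -> B) : Prop :=
  forall (f : op S) (args : 'I_(arity f) -> A),
    h (interp A f args) = interp B f (fun i => h (args i)).

Inductive term (S : signature) :=
| Var of nat
| App (f : op S) of ('I_(arity f) -> term S).
Arguments Var {S} _.
Arguments App {S} f _.

Fixpoint eval (S : signature) (A : algebra S) (v : nat -> A) (t : term S) : A :=
  match t with
  | Var n => v n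
  | App f a => interp A f (fun i => eval v (a i))
  end.

(** A variety, given (Birkhoff) by a set of identities [E]. *)
Definition in_variety (S : signature) (E : term S -> term S -> Prop)
  (A : algebra S) : Prop :=
  forall t u, E t u -> forall v : nat -> A, eval v t = eval v u.

(** [X] is a basis of the algebra [A] (i.e. [A] is free in the variety on [X]):
    [A] lies in the variety and every map from [X] to an algebra of the
    variety extends uniquely to a homomorphism. *)
Definition basis (S : signature) (E : term S -> term S -> Prop)
  (A : algebra S) (X : A -> Prop) : Prop :=
  in_variety E A /\
  forall (B : algebra S), in_variety E B ->
  forall g : A -> B,
    (exists h : A -> B, is_hom h /\ forall x, X x -> h x = g x) /\
    (forall h1 h2 : A -> B, is_hom h1 -> is_hom h2 ->
       (forall x, X x -> h1 x = g x) -> (forall x, X x -> h2 x = g x) ->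
       forall a, h1 a = h2 a).

Arguments basis {S} E A X.
Arguments in_variety {S} E A.

Definition fg_free (S : signature) (E : term S -> term S -> Prop)
  (A : algebra S) : Prop :=
  exists s : list A, basis E A (fun x => List.In x s).

Definition tr (S : signature) (I : Type) (obj : I -> algebra S) (i j : I)
  (e : i = j) : obj i -> obj j :=
  fun a => eq_rect i (fun k => carrier (obj k)) a j e.

(** [alpha_a : A_0 -> A], the homomorphism with [x0 |-> a] (chosen by
    Hilbert's epsilon; unique when [A_0] is free on [x0]). *)
Definition alpha (S : signature) (A0 A : algebra S) (x0 : A0) (a : A) : A0 -> A :=
  epsilon (inhabits (fun _ : A0 => a))
          (fun h : A0 -> A => is_hom h /\ h x0 = a).

(** The main function [s^Phi_A(a) = Phi(alpha_a)(eta^Phi(x0))],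
    where [Fm] is the morphism part of [Phi] and [eta : A_0 -> Phi(A_0)]. *)
Definition main_fun (S : signature) (I : Type) (obj : I -> algebra S)
  (Fo : I -> I)
  (Fm : forall i j : I, (obj i -> obj j) -> obj (Fo i) -> obj (Fo j))
  (i0 : I) (x0 : obj i0) (eta : obj i0 -> obj (Fo i0)) (k : I)
  (a : obj k) : obj (Fo k) :=
  Fm i0 k (alpha x0 a) (eta x0).
Arguments tr {S I} obj {i j} e _.
Arguments main_fun {S I obj Fo} Fm {i0} x0 eta k a.

(* Main.v *)
Require Import Defs.
From mathcomp Require Import all_boot.
From Stdlib Require Import Classical ClassicalEpsilon FunctionalExtensionality.

Lemma alpha_spec (S : signature) (E : term S -> term S -> Prop)
  (A0 A : algebra S) (x0 : A0) (a : A)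
  (A0_free : basis E A0 (fun y => y = x0)) (HA : in_variety E A) :
  is_hom (alpha x0 a) /\ alpha x0 a x0 = a.
Proof.
  unfold alpha. apply epsilon_spec.
  destruct (proj1 (proj2 A0_free A HA (fun _ => a))) as [h [Hh Hx]].
  exists h. split; auto.
Qed.

Lemma fg_var (S : signature) (E : term S -> term S -> Prop) (A : algebra S) :
  fg_free E A -> in_variety E A.
Proof. intros [s [H _]]. exact H. Qed.

Theorem proposition4
  (S : signature) (E : term S -> term S -> Prop)
  (I : Type) (obj : I -> algebra S)
  (obj_fg_free : forall i, fg_free E (obj i))
  (i0 : I) (x0 : obj i0)
  (A0_free : basis E (obj i0) (fun y => y = x0))
  (Fo : I -> I)
  (Fm : forall i j : I, (obj i -> obj j) -> obj (Fo i) -> obj (Fo j))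
  (Fm_hom : forall i j (h : obj i -> obj j), is_hom h -> is_hom (Fm i j h))
  (Fm_id : forall i (x : obj (Fo i)), Fm i i (fun y => y) x = x)
  (Fm_comp : forall i j l (h : obj i -> obj j) (g : obj j -> obj l),
      is_hom h -> is_hom g ->
      forall x, Fm i l (fun y => g (h y)) x = Fm j l g (Fm i j h x))
  (Fo_inj : forall i j, Fo i = Fo j -> i = j)
  (Fo_surj : forall j, exists i, Fo i = j)
  (Fm_inj : forall i j (h h' : obj i -> obj j), is_hom h -> is_hom h' ->
      (forall x, Fm i j h x = Fm i j h' x) -> forall y, h y = h' y)
  (Fm_surj : forall i j (g : obj (Fo i) -> obj (Fo j)), is_hom g ->
      exists h : obj i -> obj j, is_hom h /\ forall x, Fm i j h x = g x)
  (j0 : I) (ej0 : Fo j0 = i0) (Y : obj j0 -> Prop) (Y_basis : basis E (obj j0) Y)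
  (eta0 : obj j0 -> obj i0) (eta0_hom : is_hom eta0)
  (eta0_Y : forall y, Y y -> eta0 y = x0)
  (eta0_id : forall (e : j0 = i0) (b : obj j0), eta0 b = tr obj e b)
  (k : I) (X : obj (Fo k) -> Prop) (X_basis : basis E (obj (Fo k)) X) :
  let eta : obj i0 -> obj (Fo i0) :=
    fun a => Fm j0 i0 eta0 (tr obj (esym ej0) a) in
  let s := main_fun Fm x0 eta k in
  (forall x, X x -> ~ (exists a, s a = x)) \/ (forall b, exists a, s a = b).
Proof.
  intros eta s.
  destruct (classic (exists x, X x /\ exists a, s a = x)) as [[x [Xx [a Ha]]]|Hn].
  2:{ left. intros x Xx Hx. apply Hn. eauto. }
  right. intros b.
  have Hk : in_variety E (obj k) := @fg_var S E (obj k) (obj_fg_free k).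
  destruct (proj1 (proj2 X_basis (obj (Fo k)) (proj1 X_basis) (fun _ => b)))
    as [g [Hg Hgx]].
  destruct (Fm_surj k k g Hg) as [h [Hh Hfh]].
  exists (h a).
  destruct (@alpha_spec S E (obj i0) (obj k) x0 a A0_free Hk) as [Ha1 Ha2].
  destruct (@alpha_spec S E (obj i0) (obj k) x0 (h a) A0_free Hk) as [Hb1 Hb2].
  have Heq : alpha x0 (h a) = (fun y => h (alpha x0 a y)).
  { apply functional_extensionality.
    apply (proj2 (proj2 A0_free (obj k) Hk (fun _ => h a))); auto.
    - intros f args. rewrite Ha1. apply Hh.
    - intros y ->. rewrite Hb2. reflexivity.
    - intros y ->. rewrite Ha2. reflexivity. }
  unfold s, main_fun. rewrite Heq. rewrite (Fm_comp _ _ _ _ _ Ha1 Hh).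
  rewrite Hfh. unfold s, main_fun in Ha. rewrite Ha. apply Hgx. exact Xx.
Qed.
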